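(* Let $K$ be a field of characteristic zero, let $(p_n(x))_{n\ge 0}$ be a sequence of polynomials in $K[x]$ with $\deg p_n=n$, and let $F^{(y)}:K[x]\to K[x,y]$ be a $K$-linear operator which is shift-invariant, i.e. $F^{(y)}E^{c}=E^{c}F^{(y)}$ for every $c\in K$. Then the following are equivalent: (1) for all $n\ge 0$, $F^{(y)}p_n(x)=\sum_{k=0}^{n}p_k(x)\,p_{n-k}(y)$; (2) the operator $P_x=\epsilon_y\circ F^{(y)}$ is an invertible shift-invariant operator on $K[x]$, the sequence $(p_n(x))_{n\ge0}$ is a Sheffer sequence relative to the divided power sequence $(P_x^{-1}p_n(x))_{n\ge 0}$, and $F^{(y)}=P_yE^{y}$.
   Context: For $c\in K$, $E^{c}$ denotes the shift $p(x)\mapsto p(x+c)$ (acting on the variable $x$, on $K[x]$ or on $K[x,y]$), and $E^{y}:K[x]\to K[x,y]$ is $p(x)\mapsto p(x+y)$. An operator on $K[x]$ is shift-invariant if it commutes with all $E^{c}$, $c\in K$. $\epsilon_y:K[x,y]\to K[x]$ is evaluation at $y=0$. For an operator $\phi_x$ on $K[x]$, $\phi_y$ denotes the corresponding operator on $K[y]$ obtained by renaming $x$ to $y$ (i.e. $\phi_y\circ\pi=\pi\circ\phi_x$ with $\pi:K[x]\to K[y]$ the isomorphism $x\mapsto y$), extended $K[x]$-linearly to $K[x,y]$; operators on $K[x]$ are extended $K[y]$-linearly to $K[x,y]$. A divided power sequence is a sequence of polynomials $(q_n(x))_{n\ge0}$ with $\deg q_n=n$ and $q_n(x+y)=\sum_{k=0}^n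 q_k(x)q_{n-k}(y)$ for all $n$. A sequence $(s_n(x))_{n\ge0}$ with $\deg s_n=n$ is Sheffer relative to a divided power sequence $(q_n)$ if $s_n(x+y)=\sum_{k=0}^{n}q_{n-k}(y)\,s_k(x)$ for all $n$. *)

(* Defs.v *)
From mathcomp Require Import all_boot all_order all_algebra.
Set Implicit Arguments.
Unset Strict Implicit.
Unset Printing Implicit Defensive.
Import GRing.Theory.
Local Open Scope ring_scope.

(* Convention: K[x] = {poly K}; K[x,y] = {poly {poly K}} following polyXY.v:
   the OUTER variable is x ('X), the INNER variable is y ('Y = 'X%:P).
   A polynomial p(x) in K[x] embeds as p^:P, a polynomial q(y) as q%:P. *)

Definition shift (K : fieldType) (c : K) (p : {poly K}) : {poly K} :=
  p \Po ('X + c%:P).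

(* Extension of an operator on K[x] to K[x,y], K[y]-linearly (acts on x). *)
Definition ext_x (K : fieldType) (A : {poly K} -> {poly K})
  (u : {poly {poly K}}) : {poly {poly K}} :=
  swapXY (map_poly A (swapXY u)).

(* phi_y : the operator phi renamed to act on y, extended K[x]-linearly. *)
Definition ext_y (K : fieldType) (A : {poly K} -> {poly K})
  (u : {poly {poly K}}) : {poly {poly K}} :=
  map_poly A u.

Definition Ey (K : fieldType) (p : {poly K}) : {poly {poly K}} := poly_XaY p.

Definition eps_y (K : fieldType) (u : {poly {poly K}}) : {poly K} :=
  map_poly (fun q : {poly K} => q.[0]) u.

Definition linear_xy (K : fieldType) (F : {poly K} -> {poly {poly K}}) :=
  forall (a : K) (p q : {poly K}), F (a *: p + q) = a%:P%:P * F p + F q.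

Definition linear_x (K : fieldType) (A : {poly K} -> {poly K}) :=
  forall (a : K) (p q : {poly K}), A (a *: p + q) = a *: A p + A q.

Definition shift_invariant (K : fieldType) (A : {poly K} -> {poly K}) :=
  forall (c : K) (p : {poly K}), A (shift c p) = shift c (A p).

Definition shift_invariant_xy (K : fieldType)
  (F : {poly K} -> {poly {poly K}}) :=
  forall (c : K) (p : {poly K}), F (shift c p) = ext_x (shift c) (F p).

Definition divided_power (K : fieldType) (q : nat -> {poly K}) :=
  (forall n, size (q n) = n.+1) /\
  (forall n, Ey (q n) = \sum_(k < n.+1) (q k)^:P * (q (n - k)%N)%:P).

Definition sheffer (K : fieldType) (s q : nat -> {poly K}) :=
  (forall n, size (s n) = n.+1) /\
  (forall n, Ey (s n) = \sum_(k < n.+1) (q (n - k)%N)%:P * (s k)^:P).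

(* Main.v *)
Require Import Defs.
From mathcomp Require Import all_boot all_order all_algebra.
Import GRing.Theory.
Local Open Scope ring_scope.
Set Implicit Arguments.
Unset Strict Implicit.

Lemma natr_inj (K : fieldType) : [pchar K] =i pred0 -> injective (fun n : nat => n%:R : K).
Proof.
move=> /pcharf0P Hc m n /= e.
have [h|h] := leqP m n.
  have : ((n - m)%:R : K) = 0 by rewrite natrB // e subrr.
  move/eqP; rewrite Hc subn_eq0 => nm; apply/eqP.
  by rewrite eqn_leq h nm.
have : ((m - n)%:R : K) = 0 by rewrite natrB ?e ?subrr //; exact: ltnW.
by move/eqP; rewrite Hc subn_eq0 leqNgt h.
Qed.

Section Helpers.
Variable K : fieldType.
Implicit Types (A B : {poly K} -> {poly K}) (r s : {poly K}) (u v : {poly {poly K}}).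

Lemma lin0 A : linear_x A -> A 0 = 0.
Proof. move=> H; have := H (-1) 0 0; by rewrite scaler0 addr0 scaleN1r addNr. Qed.
Lemma linD A r s : linear_x A -> A (r + s) = A r + A s.
Proof. by move=> H; have := H 1 r s; rewrite !scale1r. Qed.
Lemma linZ A a r : linear_x A -> A (a *: r) = a *: A r.
Proof. by move=> H; have := H a r 0; rewrite !addr0 lin0 // addr0. Qed.
Lemma linB A r s : linear_x A -> A (r - s) = A r - A s.
Proof. by move=> H; have := H (-1) s r; rewrite !scaleN1r addrC => ->; rewrite addrC. Qed.
Lemma lin_sum A I (t : seq I) (Q : pred I) (G : I -> {poly K}) : linear_x A ->
  A (\sum_(i <- t | Q i) G i) = \sum_(i <- t | Q i) A (G i).
Proof. move=> H; apply: (big_morph A) => [x y|]; [exact: linD | exact: lin0]. Qed.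

Definition evy (b : K) u : {poly K} := map_poly (horner_eval b) u.

Lemma horner_map_lin A u a : linear_x A -> (map_poly A u).[a%:P] = A (u.[a%:P]).
Proof.
move=> H.
have sz : (size (map_poly A u) <= size u)%N.
  by rewrite map_polyE; apply: leq_trans (size_Poly _) _; rewrite size_map.
rewrite (horner_coef_wide _ sz) horner_coef lin_sum //; apply: eq_bigr => i _.
rewrite coef_map_id0 ?lin0 // -polyC_exp !(mulrC _ (_%:P)) !mul_polyC linZ //.
Qed.

Lemma horner_Ey r a : (Ey r).[a%:P] = shift a r.
Proof. by rewrite /Ey horner_poly_XaY /shift addrC. Qed.

Lemma evy_swap b u : evy b (swapXY u) = u.[b%:P].
Proof. by rewrite /evy -horner_swapXY swapXYK. Qed.

Lemma evy_ext B b u : linear_x B -> evy b (ext_x B u) = B (evy b u).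
Proof. by move=> H; rewrite /ext_x evy_swap horner_map_lin // -evy_swap swapXYK. Qed.

Lemma shift_lin (c : K) : linear_x (shift c).
Proof. by move=> a r s; rewrite /shift comp_polyD comp_polyZ. Qed.

Lemma evy_shift a u : evy 0 (map_poly (shift a) u) = evy a u.
Proof.
rewrite /evy -map_poly_comp_id0; last by rewrite /horner_eval horner0.
apply: eq_map_poly => q /=.
by rewrite /horner_eval /shift horner_comp hornerD hornerX hornerC add0r.
Qed.

Lemma eps_yE u : eps_y u = evy 0 u.
Proof. by []. Qed.

Lemma inf_roots (R : idomainType) (g : nat -> R) (w : {poly R}) :
  injective g -> (forall n, w.[g n] = 0) -> w = 0.
Proof.
move=> gi H; apply: (@roots_geq_poly_eq0 _ _ [seq g i | i <- iota 0 (size w)]).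
- by apply/allP => x /mapP [i _ ->]; rewrite /root H.
- by rewrite map_inj_uniq ?iota_uniq.
- by rewrite size_map size_iota.
Qed.

Lemma decomp (b r : {poly K}) m : size b = m.+1 -> (size r <= m.+1)%N ->
  (size (r - (r`_m / lead_coef b) *: b)%R <= m)%N.
Proof.
move=> sb sr; have lb : lead_coef b = b`_m by rewrite lead_coefE sb.
have lb0 : b`_m != 0 by rewrite -lb lead_coef_eq0 -size_poly_eq0 sb.
apply/leq_sizeP => j; rewrite leq_eqVlt => /orP[/eqP<-|ltmj].
  by rewrite coefB coefZ lb mulfVK // subrr.
have sbj : (size b <= j)%N by rewrite sb.
by rewrite coefB coefZ (nth_default _ (leq_trans sr ltmj)) (nth_default _ sbj) mulr0 subrr.
Qed.

Lemma basis_ind (p : nat -> {poly K}) (Hdeg : forall n, size (p n) = n.+1)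
  (Q : {poly K} -> Prop) :
  Q 0 -> (forall n, Q (p n)) -> (forall a r s, Q r -> Q s -> Q (a *: r + s)) ->
  forall r, Q r.
Proof.
move=> Q0 Qp Qc; suff H : forall m r, (size r <= m)%N -> Q r by move=> r; exact: (H _ r (leqnn _)).
elim=> [|m IH] r sr.
  by move: sr; rewrite leqn0 size_poly_eq0 => /eqP->.
have -> : r = (r`_m / lead_coef (p m)) *: p m + (r - (r`_m / lead_coef (p m)) *: p m).
  by rewrite addrC subrK.
by apply: Qc => //; apply: IH; apply: decomp.
Qed.

Lemma reindex_sum (T : comNzRingType) n (f : nat -> nat -> T) :
  \sum_(k < n.+1) f k (n - k)%N = \sum_(k < n.+1) f (n - k)%N k.
Proof.
rewrite [LHS](reindex_inj rev_ord_inj) /=; apply: eq_bigr => k _.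
by rewrite subSS subKn // -ltnS.
Qed.

Lemma map_lin_sumC A n (c d : nat -> {poly K}) : linear_x A ->
  map_poly A (\sum_(k < n) (c k)%:P * (d k)^:P) = \sum_(k < n) (A (c k))%:P * (d k)^:P.
Proof.
move=> H; apply/polyP => i; rewrite coef_map_id0 ?lin0 // !coef_sum lin_sum //.
apply: eq_bigr => k _; rewrite !coefCM coef_map /=.
by rewrite mulrC mul_polyC linZ // -mul_polyC mulrC.
Qed.

Lemma map_lin_sumX A n (c d : nat -> {poly K}) : linear_x A ->
  map_poly A (\sum_(k < n) (d k)^:P * (c k)%:P) = \sum_(k < n) (d k)^:P * (A (c k))%:P.
Proof.
move=> H; under eq_bigr do rewrite mulrC.
by rewrite map_lin_sumC //; under eq_bigr do rewrite mulrC.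
Qed.

Lemma map_inj A : linear_x A -> injective A -> injective (map_poly A).
Proof.
move=> H Ai u v e; apply/polyP => i; have := congr1 (fun w : {poly {poly K}} => w`_i) e.
by rewrite /= !coef_map_id0 ?lin0 // => /Ai.
Qed.

Lemma evy_polyC b (q : {poly K}) : evy b (q^:P) = q.
Proof.
rewrite /evy -map_poly_comp map_poly_id // => x _ /=.
by rewrite horner_evalE hornerC.
Qed.

End Helpers.


Unset Implicit Arguments.
Set Strict Implicit.

Theorem theorem1 (K : fieldType) (charK : [pchar K] =i pred0)
  (p : nat -> {poly K}) (Hdeg : forall n, size (p n) = n.+1)
  (F : {poly K} -> {poly {poly K}})
  (Flin : linear_xy F) (Fsi : shift_invariant_xy F) :
  (forall n, F (p n) = \sum_(k < n.+1) (p k)^:P * (p (n - k)%N)%:P)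
  <->
  (let P := fun r => eps_y (F r) in
   linear_x P /\ shift_invariant P /\
   exists Pinv : {poly K} -> {poly K},
     [/\ cancel P Pinv, cancel Pinv P,
         divided_power (fun n => Pinv (p n)),
         sheffer p (fun n => Pinv (p n)) &
         forall r, F r = ext_y P (Ey r)]).
Proof.
have F0 : F 0 = 0.
  by have := Flin (-1) 0 0; rewrite scaler0 addr0 !polyCN !polyC1 mulN1r addNr.
split.
- move=> H1 P.
  have Sym : forall r, swapXY (F r) = F r.
    apply: (basis_ind Hdeg).
    + by rewrite F0 rmorph0.
    + move=> n; rewrite H1 rmorph_sum /=.
      under eq_bigr do rewrite rmorphM /= swapXY_map_polyC swapXY_polyC.
      rewrite (reindex_sum n (fun i j => (p i)%:P * (p j)^:P)).
      by apply: eq_bigr => k _; rewrite mulrC.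
    + move=> a r s Hr Hs.
      by rewrite Flin rmorphD rmorphM /= Hr Hs swapXY_polyC map_polyC.
  have Plin : linear_x P.
    move=> a r s; rewrite /P !eps_yE /evy Flin rmorphD rmorphM /= map_polyC /=.
    by rewrite horner_evalE hornerC mul_polyC.
  have Pshift : shift_invariant P.
    by move=> c r; rewrite /P Fsi !eps_yE evy_ext //; exact: shift_lin.
  have FsiY : forall c r, F (shift c r) = map_poly (shift c) (F r).
    by move=> c r; rewrite -[LHS]Sym Fsi /ext_x swapXYK Sym.
  have PshE : forall a r, P (shift a r) = (F r).[a%:P].
    by move=> a r; rewrite /P eps_yE FsiY evy_shift -evy_swap Sym.
  have Kinf : forall w : {poly {poly K}}, (forall a : K, w.[a%:P] = 0) -> w = 0.
    move=> w Hw; apply: (@inf_roots _ (fun n : nat => (n%:R : K)%:P)).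
      by move=> m n /polyC_inj /(natr_inj charK).
    by move=> n; exact: Hw.
  have Kinf' : forall u v : {poly {poly K}}, (forall a, u.[a%:P] = v.[a%:P]) -> u = v.
    move=> u v H; apply/eqP; rewrite -subr_eq0; apply/eqP; apply: Kinf => a.
    by rewrite hornerD hornerN H subrr.
  have FeqG : forall r, F r = map_poly P (Ey r).
    by move=> r; apply: Kinf' => a; rewrite horner_map_lin // horner_Ey PshE.
  have FeqE : forall r, F r = Ey (P r).
    by move=> r; apply: Kinf' => a; rewrite horner_Ey -Pshift PshE.
  have c0 : (p 0).[0] != 0.
    rewrite horner_coef0; have : lead_coef (p 0) != 0 by rewrite lead_coef_eq0 -size_poly_eq0 Hdeg.
    by rewrite lead_coefE Hdeg.
  have Ppn : forall n, size (P (p n)) = n.+1.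
    move=> n; rewrite /P H1 eps_yE /evy rmorph_sum big_ord_recr /= rmorphM /= map_polyC /=.
    rewrite -/(evy 0 _) evy_polyC subnn addrC size_polyDl; rewrite mulrC mul_polyC size_scale // Hdeg //.
    rewrite ltnS; apply/leq_sizeP => j hj; rewrite coef_sum big1 // => k _.
    rewrite rmorphM /= map_polyC /= -/(evy 0 _) evy_polyC coefMC nth_default ?mul0r // Hdeg.
    exact: leq_trans (ltn_ord k) hj.
  have Psize : forall r, size (P r) = size r.
    suff H : forall m (r : {poly K}), (size r <= m)%N -> size (P r) = size r.
      by move=> r; exact: H (leqnn _).
    elim=> [|m IH] r sr.
      by move: sr; rewrite leqn0 size_poly_eq0 => /eqP->; rewrite lin0.
    have [sm|hm] := leqP (size r) m; first exact: IH.
    have szr : size r = m.+1 by apply/eqP; rewrite eqn_leq sr hm.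
    set a := r`_m / lead_coef (p m).
    have dec := decomp (Hdeg m) sr; rewrite -/a in dec.
    have er : r = a *: p m + (r - a *: p m) by rewrite subrKC.
    have a0 : a != 0.
      rewrite mulf_neq0 ?invr_eq0 ?lead_coef_eq0 -?size_poly_eq0 ?Hdeg //.
      by have := lead_coef_eq0 r; rewrite lead_coefE szr /= => ->; rewrite -size_poly_eq0 szr.
    rewrite szr er (linD _ _ Plin) (linZ _ _ Plin) // size_polyDl size_scale ?Ppn //.
    by rewrite IH // size_scale ?Ppn // ltnS.
  have Pinj : injective P.
    move=> r s e; apply/eqP; rewrite -subr_eq0 -size_poly_eq0 -Psize linB // e subrr.
    by rewrite size_poly0.
  have Psurj : forall s, exists r, P r == s.
    suff H : forall m (s : {poly K}), (size s <= m)%N -> exists r, P r = s.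
      by move=> s; have [r e] := H _ s (leqnn _); exists r; rewrite e.
    elim=> [|m IH] s ss.
      by exists 0; move: ss; rewrite leqn0 size_poly_eq0 => /eqP->; rewrite lin0.
    set a := s`_m / lead_coef (P (p m)).
    have [r' er'] := IH _ (decomp (Ppn m) ss).
    by exists (a *: p m + r'); rewrite linD // linZ // er' subrKC.
  pose Pinv s := xchoose (Psurj s).
  have PinvK : cancel Pinv P by move=> s; exact/eqP/(xchooseP (Psurj s)).
  have PK : cancel P Pinv by move=> r; apply: Pinj; rewrite PinvK.
  have Shef : forall n, Ey (p n) = \sum_(k < n.+1) (Pinv (p (n - k)%N))%:P * (p k)^:P.
    move=> n; apply: (map_inj Plin Pinj); rewrite -FeqG H1.
    rewrite (map_lin_sumC n.+1 (fun k => Pinv (p (n - k)%N)) p Plin).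
    by apply: eq_bigr => k _; rewrite PinvK mulrC.
  split => //; split => //; exists Pinv; split => //.
  split.
    by move=> n; rewrite -Psize PinvK Hdeg.
  move=> n; apply: (map_inj Plin Pinj); rewrite -FeqG FeqE PinvK.
  rewrite (map_lin_sumX n.+1 (fun k => Pinv (p (n - k)%N)) (fun k => Pinv (p k)) Plin).
  under [RHS]eq_bigr do rewrite PinvK.
  rewrite /Ey -swapXY_poly_XaY -/(Ey _) Shef rmorph_sum /=.
  under eq_bigr do rewrite rmorphM /= swapXY_map_polyC swapXY_polyC.
  by rewrite (reindex_sum n (fun i j => (Pinv (p j))^:P * (p i)%:P)).
- move=> H n; move: H => /= [Plin [Psi [Pinv [PK PinvK Hdp [_ Hs] FE]]]].
  rewrite FE /ext_y Hs.
  rewrite (map_lin_sumC n.+1 (fun k => Pinv (p (n - k)%N)) p Plin).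
  by apply: eq_bigr => k _; rewrite PinvK mulrC.
Qed.
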